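(* Let $S$ be any shape having $k$ turning points and $l$ line segments, and let $i(S)$ be the incompressible shape obtained from $S$ by compressing all its compressible columns and rows. Then: (a) $i(S)$ has $k$ turning points and $l$ line segments; (b) there is a one-to-one correspondence between the turning points and line segments of $i(S)$ and those of $S$ such that $i(S)$ and $S$ are geometrically equivalent up to the lengths of their line segments, the length of each line segment of $i(S)$ is at most the length of the corresponding line segment of $S$, and the relative order of the turning points with respect to each other (in both coordinates) is the same in $S$ and $i(S)$; (c) $i(S)$ fits within a $k\times k$ square area of the grid.
   Context: A shape $S=(V,E)$ is a finite connected graph whose nodes occupy distinct integer grid points and whose edges join only nodes at orthogonal distance $1$. A node $u$ is a turning point of $S$ if $u$ is a leaf or $u$ has two neighbors $v_1,v_2$ with $v_1u$ perpendicular to $uv_2$. A line segment is a maximal straight path of $S$ between two turning points containing no other turning point. A column (row) of $S$ is a grid column (row) containing nodes of $S$; it is compressible if it contains no turning point of $S$ (then it contains no vertical (horizontal) edges and meets only horizontal (vertical) segments, each of which extends through it). For a maximal run $C_l,\dots,C_r$ of consecutive compressible columns, every horizontal segment $s$ meeting them has a node $u_{l-1}(s)$ in column $C_{l-1}$ and a node $u_{r+1}(s)$ in $C_{r+1}$; a compression operation deletes the nodes in columns $C_l,\dots,C_r$, shifts everything to the right of $C_r$ left by $r-l+1$ units, and joins $u_{l-1}(s)$ to $u_{r+1}(s)$ for each such $s$. Compression of rows is defined analogously. A shape is incompressible if it has no compressible columns or rows; $i(S)$ denotes the incompressible shape obtained by compressing all compressible columns and rows of $S$. *)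

(* Defs.v *)
From HB Require Import structures.
From mathcomp Require Import all_boot all_order all_algebra.
From mathcomp Require Import finmap.
Set Implicit Arguments. Unset Strict Implicit. Unset Printing Implicit Defensive.
Import Order.TTheory GRing.Theory Num.Theory.
Local Open Scope fset_scope.
Local Open Scope ring_scope.

(** Grid points: (x, y) = (column, row). *)
Definition pt := (int * int)%type.

(** A graph drawn on the grid: node set and (undirected) edge set. *)
Record gshape := Shape { V : {fset pt}; E : {fset pt * pt} }.

Definition adj (S : gshape) (u v : pt) : bool :=
  ((u, v) \in E S) || ((v, u) \in E S).

Definition unit_dist (u v : pt) : bool :=
  ((u.1 == v.1) && (`|u.2 - v.2| == 1)) || ((u.2 == v.2) && (`|u.1 - v.1| == 1)).

Definition connected (S : gshape) : Prop :=
  forall u v, u \in V S -> v \in V S ->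
    exists p : seq pt, [/\ path (adj S) u p, last u p = v &
                           all (fun x => x \in V S) p].

Definition is_shape (S : gshape) : Prop :=
  [/\ V S != fset0,
      (forall e, e \in E S -> [/\ e.1 \in V S, e.2 \in V S & unit_dist e.1 e.2])
    & connected S].

Definition hnbr (S : gshape) (u : pt) : bool :=
  adj S u (u.1 + 1, u.2) || adj S u (u.1 - 1, u.2).
Definition vnbr (S : gshape) (u : pt) : bool :=
  adj S u (u.1, u.2 + 1) || adj S u (u.1, u.2 - 1).
Definition deg (S : gshape) (u : pt) : nat :=
  count (adj S u) [:: (u.1 + 1, u.2); (u.1 - 1, u.2); (u.1, u.2 + 1); (u.1, u.2 - 1)].

Definition turningb (S : gshape) (u : pt) : bool :=
  (u \in V S) && ((deg S u == 1)%N || (hnbr S u && vnbr S u)).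

Definition tps (S : gshape) : {fset pt} := [fset u in V S | turningb S u].

(** Line segment from u to v (u left of / below v): a straight path of S
    between two turning points containing no other turning point. *)
Definition hsegb (S : gshape) (u v : pt) : bool :=
  let n := absz (v.1 - u.1) in
  [&& u.2 == v.2, u.1 < v.1, turningb S u, turningb S v,
      all (fun i : nat => adj S (u.1 + i%:Z, u.2) (u.1 + i%:Z + 1, u.2)) (iota 0 n)
    & all (fun i : nat => ~~ turningb S (u.1 + i%:Z, u.2)) (iota 1 n.-1)].
Definition vsegb (S : gshape) (u v : pt) : bool :=
  let n := absz (v.2 - u.2) in
  [&& u.1 == v.1, u.2 < v.2, turningb S u, turningb S v,
      all (fun i : nat => adj S (u.1, u.2 + i%:Z) (u.1, u.2 + i%:Z + 1)) (iota 0 n)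
    & all (fun i : nat => ~~ turningb S (u.1, u.2 + i%:Z)) (iota 1 n.-1)].
Definition segb (S : gshape) (u v : pt) : bool := hsegb S u v || vsegb S u v.

(** the set of line segments, each represented by its pair of endpoints *)
Definition segs (S : gshape) : {fset pt * pt} :=
  [fset p in tps S `*` tps S | segb S p.1 p.2].

Definition seg_len (u v : pt) : nat := (absz (v.1 - u.1) + absz (v.2 - u.2))%N.

Definition compressible_col (S : gshape) (x : int) : Prop :=
  (exists p, p \in V S /\ p.1 = x) /\ (forall p, p \in tps S -> p.1 <> x).
Definition compressible_row (S : gshape) (y : int) : Prop :=
  (exists p, p \in V S /\ p.2 = y) /\ (forall p, p \in tps S -> p.2 <> y).

Definition max_col_run (S : gshape) (l r : int) : Prop :=
  [/\ l <= r, (forall x, l <= x <= r -> compressible_col S x),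
      ~ compressible_col S (l - 1) & ~ compressible_col S (r + 1)].
Definition max_row_run (S : gshape) (l r : int) : Prop :=
  [/\ l <= r, (forall y, l <= y <= r -> compressible_row S y),
      ~ compressible_row S (l - 1) & ~ compressible_row S (r + 1)].

(** compression of the columns l..r: delete their nodes, shift everything to
    the right of column r left by r-l+1, and join u_{l-1}(s) to u_{r+1}(s)
    for each horizontal segment s crossing the run (one per node of column l). *)
Definition shiftc (l r : int) (p : pt) : pt :=
  if r < p.1 then (p.1 - (r - l + 1), p.2) else p.
Definition keepc (l r : int) (p : pt) : bool := ~~ ((l <= p.1) && (p.1 <= r)).

Definition compress_cols (S : gshape) (l r : int) : gshape :=
  Shape (shiftc l r @` [fset p in V S | keepc l r p])
        (((fun e : pt * pt => (shiftc l r e.1, shiftc l r e.2))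
            @` [fset e in E S | keepc l r e.1 && keepc l r e.2])
         `|` ((fun p : pt => ((l - 1, p.2), (l, p.2)))
            @` [fset p in V S | p.1 == l])).

Definition trp (p : pt) : pt := (p.2, p.1).
Definition trS (S : gshape) : gshape :=
  Shape (trp @` V S) ((fun e : pt * pt => (trp e.1, trp e.2)) @` E S).
Definition compress_rows (S : gshape) (l r : int) : gshape :=
  trS (compress_cols (trS S) l r).

Inductive compress_step (S : gshape) : gshape -> Prop :=
| cstep_col l r : max_col_run S l r -> compress_step S (compress_cols S l r)
| cstep_row l r : max_row_run S l r -> compress_step S (compress_rows S l r).

Inductive compresses : gshape -> gshape -> Prop :=
| compresses_refl S : compresses S S
| compresses_step S1 S2 S3 :
    compress_step S1 S2 -> compresses S2 S3 -> compresses S1 S3.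

Definition incompressible (S : gshape) : Prop :=
  (forall x, ~ compressible_col S x) /\ (forall y, ~ compressible_row S y).

(** S fits within a k x k square area of the grid (k x k grid points) *)
Definition fits_in (k : nat) (S : gshape) : Prop :=
  exists x0 y0 : int, forall p, p \in V S ->
    (x0 <= p.1 < x0 + k%:Z) /\ (y0 <= p.2 < y0 + k%:Z).

(* Main.v *)
Require Import Defs.
From HB Require Import structures.
From mathcomp Require Import all_boot all_order all_algebra.
From mathcomp Require Import finmap zify.
Import Order.TTheory GRing.Theory Num.Theory.
Local Open Scope fset_scope.
Local Open Scope ring_scope.
Set Implicit Arguments. Unset Strict Implicit.

Lemma adjC S u v : adj S u v = adj S v u.
Proof. by rewrite /adj orbC. Qed.

Definition wf_edges (S : gshape) :=
  forall e, e \in E S -> [/\ e.1 \in V S, e.2 \in V S & unit_dist e.1 e.2].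

Lemma unit_distC u v : unit_dist u v = unit_dist v u.
Proof. by rewrite /unit_dist (eq_sym u.1) (eq_sym u.2) (distrC u.2) (distrC u.1). Qed.

Lemma adj_in S u v : wf_edges S -> adj S u v -> [/\ u \in V S, v \in V S & unit_dist u v].
Proof.
move=> wf /orP[/wf[]//|/wf[/= h1 h2 h3]]. by rewrite unit_distC.
Qed.

Lemma unit_distP (u v : pt) : unit_dist u v ->
  (v.1 = u.1 + 1 /\ v.2 = u.2) \/ (v.1 = u.1 - 1 /\ v.2 = u.2) \/
  (v.1 = u.1 /\ v.2 = u.2 + 1) \/ (v.1 = u.1 /\ v.2 = u.2 - 1).
Proof.
case: u v => [a b] [c d]; rewrite /unit_dist /=.
case/orP=> /andP[/eqP h1 /eqP h2]; lia.
Qed.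

Lemma pt_eq (u v : pt) : u.1 = v.1 -> u.2 = v.2 -> u = v.
Proof. by case: u v => [? ?] [? ?] /= -> ->. Qed.

Definition nbrs (u : pt) : seq pt :=
  [:: (u.1 + 1, u.2); (u.1 - 1, u.2); (u.1, u.2 + 1); (u.1, u.2 - 1)].

Lemma degE S u : deg S u = addn (addn (addn (adj S u (u.1 + 1, u.2)) (adj S u (u.1 - 1, u.2)))
   (adj S u (u.1, u.2 + 1))) (adj S u (u.1, u.2 - 1)).
Proof. by rewrite /deg /= !addnA addn0. Qed.

Lemma deg_pos S u v : wf_edges S -> adj S u v -> (0 < deg S u)%N.
Proof.
move=> wf h; have [_ _ /unit_distP] := adj_in wf h.
have e: forall w, v = w -> adj S u w by move=> w <-.
rewrite degE.
case=> [[h1 h2]|[[h1 h2]|[[h1 h2]|[h1 h2]]]].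
- have -> : adj S u (u.1 + 1, u.2) by apply: e; apply: pt_eq.
  lia.
- have -> : adj S u (u.1 - 1, u.2) by apply: e; apply: pt_eq.
  lia.
- have -> : adj S u (u.1, u.2 + 1) by apply: e; apply: pt_eq.
  lia.
- have -> : adj S u (u.1, u.2 - 1) by apply: e; apply: pt_eq.
  lia.
Qed.

Lemma in_tps S u : (u \in tps S) = turningb S u.
Proof. by rewrite /tps !inE /turningb andbA andbb. Qed.

Lemma fin_contra (A : {fset pt}) (f : nat -> pt) :
  injective f -> ~ (forall n, f n \in A).
Proof.
move=> inj h.
have sub : {subset [seq f i | i <- iota 0 (#|` A|).+1] <= enum_fset A}.
  by move=> x /mapP[i _ ->]; exact: h.
have := uniq_leq_size _ sub.
rewrite map_inj_uniq // iota_uniq size_map size_iota => /(_ isT).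
by rewrite ltnn.
Qed.

Lemma trpK : involutive trp. Proof. by case. Qed.
Lemma trp_inj : injective trp. Proof. exact: inv_inj trpK. Qed.

Definition trE (e : pt * pt) : pt * pt := (trp e.1, trp e.2).
Lemma trEK : involutive trE. Proof. by case=> [[? ?] [? ?]]. Qed.
Lemma trE_inj : injective trE. Proof. exact: inv_inj trEK. Qed.

Lemma in_trV S p : (trp p \in V (trS S)) = (p \in V S).
Proof. by rewrite /trS /= mem_imfset //; exact: trp_inj. Qed.

Lemma in_trV' S p : (p \in V (trS S)) = (trp p \in V S).
Proof. by rewrite -{1}(trpK p) in_trV. Qed.

Lemma in_trE S a b : ((trp a, trp b) \in E (trS S)) = ((a, b) \in E S).
Proof.
rewrite /trS /=.
have -> : (trp a, trp b) = trE (a, b) by [].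
rewrite (mem_imfset _ _ trE_inj) //.
Qed.

Lemma adj_tr S a b : adj (trS S) (trp a) (trp b) = adj S a b.
Proof. by rewrite /adj !in_trE. Qed.

Lemma adj_tr' S (x y z w : int) : adj (trS S) (x, y) (z, w) = adj S (y, x) (w, z).
Proof. exact: (adj_tr S (y, x) (w, z)). Qed.

Lemma deg_tr S a : deg (trS S) (trp a) = deg S a.
Proof. case: a => x y; rewrite !degE /trp /= !adj_tr' /=. lia. Qed.

Lemma hnbr_tr S a : hnbr (trS S) (trp a) = vnbr S a.
Proof. by case: a => x y; rewrite /hnbr /vnbr /trp /= !adj_tr'. Qed.
Lemma vnbr_tr S a : vnbr (trS S) (trp a) = hnbr S a.
Proof. by case: a => x y; rewrite /hnbr /vnbr /trp /= !adj_tr'. Qed.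

Lemma turning_tr S a : turningb (trS S) (trp a) = turningb S a.
Proof. by rewrite /turningb in_trV deg_tr hnbr_tr vnbr_tr (andbC (vnbr S a)). Qed.

Lemma turning_tr' S (x y : int) : turningb (trS S) (x, y) = turningb S (y, x).
Proof. exact: (turning_tr S (y, x)). Qed.

Lemma tps_tr S : tps (trS S) = trp @` tps S.
Proof.
apply/fsetP => p; rewrite -(trpK p) (mem_imfset _ _ trp_inj) !in_tps.
by rewrite turning_tr.
Qed.

Lemma hseg_tr S u v : hsegb (trS S) (trp u) (trp v) = vsegb S u v.
Proof.
case: u v => [a b] [c d]; rewrite /hsegb /vsegb /= !turning_tr' /=.
congr [&& _, _, _, _, _ & _].
- by apply: eq_all => i /=; rewrite adj_tr'.
- by apply: eq_all => i /=; rewrite turning_tr'.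
Qed.

Lemma vseg_tr S u v : vsegb (trS S) (trp u) (trp v) = hsegb S u v.
Proof.
case: u v => [a b] [c d]; rewrite /hsegb /vsegb /= !turning_tr' /=.
congr [&& _, _, _, _, _ & _].
- by apply: eq_all => i /=; rewrite adj_tr'.
- by apply: eq_all => i /=; rewrite turning_tr'.
Qed.

Lemma segb_tr S u v : segb (trS S) (trp u) (trp v) = segb S u v.
Proof. by rewrite /segb hseg_tr vseg_tr orbC. Qed.

Lemma seg_len_tr u v : seg_len (trp u) (trp v) = seg_len u v.
Proof. by rewrite /seg_len addnC. Qed.

Lemma trSK S : trS (trS S) = S.
Proof.
case: S => V0 E0; rewrite /trS /=; congr Shape; apply/fsetP => x.
- by rewrite -{1}(trpK x) !(mem_imfset _ _ trp_inj).
- rewrite -(trEK x).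
  have h : forall A : {fset pt * pt}, (fun e : pt * pt => (trp e.1, trp e.2)) @` A = trE @` A by [].
  by rewrite !h !(mem_imfset _ _ trE_inj) trEK.
Qed.

Lemma comp_row_tr S y : compressible_row S y <-> compressible_col (trS S) y.
Proof.
rewrite /compressible_row /compressible_col tps_tr; split.
- case=> [[p [hp e]] h]; split.
    by exists (trp p); rewrite in_trV.
  move=> q /imfsetP[q' /= hq' ->] /=; exact: h.
- case=> [[p [hp e]] h]; split.
    by exists (trp p); rewrite -in_trV'.
  move=> q hq /=; apply: (h (trp q)); rewrite (mem_imfset _ _ trp_inj) //.
Qed.

Lemma row_run_tr S l r : max_row_run S l r <-> max_col_run (trS S) l r.
Proof.
rewrite /max_row_run /max_col_run; split; case=> h1 h2 h3 h4; split=> //.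
- by move=> x hx; apply/comp_row_tr/h2.
- by rewrite -comp_row_tr.
- by rewrite -comp_row_tr.
- by move=> x hx; apply/comp_row_tr/h2.
- by rewrite comp_row_tr.
- by rewrite comp_row_tr.
Qed.

Definition nonisol (S : gshape) := forall p, p \in V S -> (0 < deg S p)%N.
Definition colcontig (S : gshape) := forall p q : pt, p \in V S -> q \in V S ->
  forall x : int, p.1 <= x <= q.1 -> exists z : pt, z \in V S /\ z.1 = x.
Definition rowcontig (S : gshape) := forall p q : pt, p \in V S -> q \in V S ->
  forall y : int, p.2 <= y <= q.2 -> exists z : pt, z \in V S /\ z.2 = y.
Definition Inv S := [/\ wf_edges S, nonisol S, colcontig S & rowcontig S].

Lemma unit_dist_tr a b : unit_dist (trp a) (trp b) = unit_dist a b.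
Proof. by case: a b => [? ?] [? ?]; rewrite /unit_dist /= orbC. Qed.

Lemma Inv_tr S : Inv S -> Inv (trS S).
Proof.
case=> wf ni cc rc; split.
- move=> e /imfsetP[e0 /= he0 ->] /=; have [h1 h2 h3] := wf e0 he0.
  by rewrite !in_trV unit_dist_tr.
- move=> p; rewrite in_trV' => hp; rewrite -(trpK p) deg_tr; exact: ni.
- move=> p q; rewrite !in_trV' => hp hq x hx.
  have [z [hz e]] := rc _ _ hp hq x hx.
  by exists (trp z); rewrite in_trV.
- move=> p q; rewrite !in_trV' => hp hq x hx.
  have [z [hz e]] := cc _ _ hp hq x hx.
  by exists (trp z); rewrite in_trV.
Qed.

Definition Corr (S T : gshape) (f : pt -> pt) :=
  [/\ {in tps S &, injective f},
      f @` tps S = tps T,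
      {in tps S &, forall u v,
         [/\ (u.1 < v.1) = ((f u).1 < (f v).1),
             (u.1 == v.1) = ((f u).1 == (f v).1),
             (u.2 < v.2) = ((f u).2 < (f v).2) &
             (u.2 == v.2) = ((f u).2 == (f v).2)]},
      {in tps S &, forall u v, segb S u v = segb T (f u) (f v)} &
      {in tps S &, forall u v, segb S u v ->
         (seg_len (f u) (f v) <= seg_len u v)%N}].

Lemma Corr_id S : Corr S S id.
Proof. by split=> //; rewrite imfset_id. Qed.

Lemma Corr_comp S1 S2 S3 f h : Corr S1 S2 f -> Corr S2 S3 h -> Corr S1 S3 (h \o f).
Proof.
case=> i1 m1 o1 s1 l1 [i2 m2 o2 s2 l2].
have inf : forall u, u \in tps S1 -> f u \in tps S2.
  by move=> u hu; rewrite -m1; apply/imfsetP; exists u.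
split.
- by move=> u v hu hv /= /(i2 _ _ (inf _ hu) (inf _ hv)) /i1; apply.
- by rewrite imfset_comp m1 m2.
- move=> u v hu hv /=; have [a1 a2 a3 a4] := o1 u v hu hv.
  have [b1 b2 b3 b4] := o2 _ _ (inf _ hu) (inf _ hv).
  by split; [rewrite a1 b1|rewrite a2 b2|rewrite a3 b3|rewrite a4 b4].
- by move=> u v hu hv /=; rewrite s1 // s2 //; apply: inf.
- move=> u v hu hv /= hs; apply: leq_trans (l1 _ _ hu hv hs).
  by apply: l2; [apply: inf|apply: inf|rewrite -s1].
Qed.

Lemma Corr_tr S T f : Corr S T f -> Corr (trS S) (trS T) (fun p => trp (f (trp p))).
Proof.
case=> i1 m1 o1 s1 l1.
have tp : forall u, u \in tps (trS S) -> trp u \in tps S.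
  by move=> u; rewrite tps_tr -{1}(trpK u) (mem_imfset _ _ trp_inj).
split.
- move=> u v hu hv /= /trp_inj /(i1 _ _ (tp _ hu) (tp _ hv)) /trp_inj //.
- rewrite !tps_tr -m1 -!imfset_comp; apply: eq_imfset => // x /=.
  by rewrite trpK.
- move=> u v hu hv; have [a1 a2 a3 a4] := o1 _ _ (tp _ hu) (tp _ hv).
  by move: a1 a2 a3 a4; case: u v {hu hv} => [? ?] [? ?] /= -> -> -> ->.
- move=> u v hu hv /=; rewrite -(trpK u) -(trpK v) segb_tr !trpK segb_tr.
  exact: s1 (tp _ hu) (tp _ hv).
- move=> u v hu hv /=; rewrite -{1}(trpK u) -{1}(trpK v) segb_tr seg_len_tr => hs.
  by rewrite -{2}(trpK u) -{2}(trpK v) seg_len_tr; apply: l1 => //; apply: tp.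
Qed.

Definition colrun (S : gshape) (l r : int) :=
  l <= r /\ (forall x, l <= x <= r -> compressible_col S x).

Lemma keepP l r (a : pt) : keepc l r a = (a.1 < l) || (r < a.1).
Proof. rewrite /keepc negb_and -!ltNge //. Qed.

Lemma sh1 l r (a : pt) : (shiftc l r a).1 = if r < a.1 then a.1 - (r - l + 1) else a.1.
Proof. by rewrite /shiftc; case: ifP. Qed.
Lemma sh2 l r (a : pt) : (shiftc l r a).2 = a.2.
Proof. by rewrite /shiftc; case: ifP. Qed.

Lemma Gc l r (x : int) : l <= r -> (x < l) || (r < x) ->
  (x < l /\ (if r < x then x - (r - l + 1) else x) = x) \/
  (r < x /\ (if r < x then x - (r - l + 1) else x) = x - (r - l + 1)).
Proof.
move=> lr; case: (ltP r x) => h k; [right|left]; split=> //; lia.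
Qed.

Lemma sh_inj l r a b : l <= r -> keepc l r a -> keepc l r b ->
  shiftc l r a = shiftc l r b -> a = b.
Proof.
move=> lr; rewrite !keepP => ka kb e.
have e1 := congr1 fst e; have e2 := congr1 snd e.
rewrite !sh1 in e1; rewrite !sh2 in e2.
apply: pt_eq => //.
case: (Gc lr ka) => [[h1 h2]|[h1 h2]]; case: (Gc lr kb) => [[h3 h4]|[h3 h4]];
  rewrite h2 h4 in e1; lia.
Qed.

Lemma bool4 (a b c d : bool) : (0 < addn (addn (addn a b) c) d)%N ->
  (addn (addn (addn a b) c) d != 1)%N -> ~~ ((a || b) && (c || d)) ->
  (a && b && ~~ c && ~~ d) || (c && d && ~~ a && ~~ b).
Proof. by case: a; case: b; case: c; case: d. Qed.

Lemma comp_nturn S x (p : pt) : compressible_col S x -> p.1 = x -> ~~ turningb S p.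
Proof.
case=> _ h e; apply/negP => t; apply: (h p) => //; by rewrite in_tps.
Qed.

Lemma turning_unfold S p : p \in V S -> turningb S p =
  (deg S p == 1)%N || (hnbr S p && vnbr S p).
Proof. by rewrite /turningb => ->. Qed.

Lemma hstraight S (p : pt) : wf_edges S -> nonisol S -> p \in V S ->
  compressible_col S p.1 ->
  adj S p (p.1 + 1, p.2) /\ adj S p (p.1 - 1, p.2).
Proof.
move=> wf ni hp cc.
have key : forall q : pt, q \in V S -> q.1 = p.1 ->
   (adj S q (q.1 + 1, q.2) && adj S q (q.1 - 1, q.2) &&
    ~~ adj S q (q.1, q.2 + 1) && ~~ adj S q (q.1, q.2 - 1)) ||
   (adj S q (q.1, q.2 + 1) && adj S q (q.1, q.2 - 1) &&
    ~~ adj S q (q.1 + 1, q.2) && ~~ adj S q (q.1 - 1, q.2)).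
  move=> q hq e; apply: bool4; first by rewrite -degE; exact: ni.
    have := comp_nturn cc e; rewrite turning_unfold //.
    by rewrite negb_or degE => /andP[].
  have := comp_nturn cc e; rewrite turning_unfold //.
  by rewrite negb_or => /andP[].
have [/andP[/andP[/andP[-> ->] _] _]|hv] := orP (key p hp erefl); first by [].
exfalso.
case: p hp cc hv key => x y /= hp cc hv key.
have ind : forall n : nat, (x, y + n%:Z) \in V S /\
   adj S (x, y + n%:Z) (x, y + n%:Z + 1) && ~~ adj S (x, y + n%:Z) (x + 1, y + n%:Z)
   && ~~ adj S (x, y + n%:Z) (x - 1, y + n%:Z).
  elim=> [|n [hn an]].
    rewrite addr0; split=> //; move: hv => /andP[/andP[/andP[-> _] -> ->]] //.
  have hn1 : (x, y + n%:Z + 1) \in V S.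
    by move: an => /andP[/andP[/(adj_in wf)[]]].
  have e : y + n.+1%:Z = y + n%:Z + 1 by lia.
  rewrite e; split=> //.
  have := orP (key _ hn1 erefl); case=> /= h.
  - exfalso; have := comp_nturn cc (erefl : (x, y + n%:Z + 1).1 = x).
    rewrite turning_unfold // /hnbr /vnbr /=.
    move: h => /andP[/andP[/andP[-> _] _] _] /=.
    have -> : y + n%:Z + 1 - 1 = y + n%:Z by lia.
    have an1 : adj S (x, y + n%:Z + 1) (x, y + n%:Z).
      by rewrite adjC; move: an => /andP[/andP[-> _] _].
    by rewrite an1 !orbT.
  - by move: h => /andP[/andP[/andP[-> _] -> ->]].
apply: (@fin_contra (V S) (fun n : nat => (x, y + n%:Z))).
  by move=> m n /= [] h; lia.
by move=> n; case: (ind n).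
Qed.

Lemma run_step S l r x y : wf_edges S -> nonisol S -> colrun S l r ->
  l <= x <= r -> (x, y) \in V S ->
  [/\ adj S (x, y) (x + 1, y), adj S (x, y) (x - 1, y),
      (x + 1, y) \in V S & (x - 1, y) \in V S].
Proof.
move=> wf ni [lr cc] hx hp.
have [h1 h2] := hstraight wf ni hp (cc x hx).
by split=> //; [case: (adj_in wf h1) | case: (adj_in wf h2)].
Qed.

Lemma run_chain S l r x y : wf_edges S -> nonisol S -> colrun S l r ->
  l <= x <= r -> ((x, y) \in V S) = ((l, y) \in V S).
Proof.
move=> wf ni cr hx.
have lr := cr.1.
have ind : forall n : nat, (l + n%:Z <= r) -> ((l + n%:Z, y) \in V S) = ((l, y) \in V S).
  elim=> [|n IH] hn; first by rewrite addr0.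
  have e : l + n.+1%:Z = l + n%:Z + 1 by lia.
  rewrite e -IH; last by lia.
  apply/idP/idP => h.
  - have hx1 : l <= l + n%:Z + 1 <= r by lia.
    have [_ _ _] := run_step wf ni cr hx1 h.
    by have -> : l + n%:Z + 1 - 1 = l + n%:Z by lia.
  - have hx0 : l <= l + n%:Z <= r by lia.
    by have [_ _ -> _] := run_step wf ni cr hx0 h.
have e : x = l + (absz (x - l))%:Z by lia.
by rewrite e ind //; lia.
Qed.

Lemma run_E S l r x y : wf_edges S -> nonisol S -> colrun S l r ->
  l - 1 <= x <= r -> adj S (x, y) (x + 1, y) = ((l, y) \in V S).
Proof.
move=> wf ni cr hx; have lr := cr.1.
apply/idP/idP => h.
- have [h1 h2 _] := adj_in wf h.
  case: (ltP x l) => hxl.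
  + have e : x + 1 = l by lia.
    by rewrite e in h2.
  + have hx0 : l <= x <= r by lia.
    by rewrite -(run_chain y wf ni cr hx0).
- case: (ltP x l) => hxl.
  + have e : x = l - 1 by lia.
    have hx0 : l <= l <= r by lia.
    have [_ h2 _ _] := run_step wf ni cr hx0 h.
    rewrite adjC e; have -> : l - 1 + 1 = l by lia.
    exact: h2.
  + have hx' : l <= x <= r by lia.
    have hv : (x, y) \in V S by rewrite (run_chain y wf ni cr hx').
    by have [-> _ _ _] := run_step wf ni cr hx' hv.
Qed.

Lemma run_ends S l r y : wf_edges S -> nonisol S -> colrun S l r ->
  (l, y) \in V S -> (l - 1, y) \in V S /\ (r + 1, y) \in V S.
Proof.
move=> wf ni cr h; have lr := cr.1.
have hl : l <= l <= r by lia.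
have hr0 : l <= r <= r by lia.
have [_ _ _ ->] := run_step wf ni cr hl h.
split=> //.
have hr : (r, y) \in V S by rewrite (run_chain y wf ni cr hr0).
by have [_ _ -> _] := run_step wf ni cr hr0 hr.
Qed.

Lemma inVT S l r a : l <= r -> keepc l r a ->
  (shiftc l r a \in V (compress_cols S l r)) = (a \in V S).
Proof.
move=> lr ka; rewrite /compress_cols /=; apply/imfsetP/idP.
- case=> b; rewrite !inE /= => /andP[hb kb] /(sh_inj lr ka kb) ->; done.
- by move=> h; exists a => //; rewrite !inE /= h ka.
Qed.

Lemma VT_inv S l r q : q \in V (compress_cols S l r) ->
  exists a : pt, [/\ a \in V S, keepc l r a & q = shiftc l r a].
Proof.
rewrite /compress_cols /= => /imfsetP[a]; rewrite !inE /= => /andP[ha ka] ->.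
by exists a.
Qed.

Definition hbr S (l r : int) (a b : pt) :=
  [&& a.1 == l - 1, b.1 == r + 1, a.2 == b.2 & (l, a.2) \in V S].

Lemma inET S l r a b : l <= r -> keepc l r a -> keepc l r b ->
  ((shiftc l r a, shiftc l r b) \in E (compress_cols S l r)) =
  ((a, b) \in E S) || hbr S l r a b.
Proof.
move=> lr ka kb; rewrite /compress_cols /= in_fsetU; congr (_ || _).
- apply/imfsetP/idP.
  + case=> e; rewrite !inE /= => /andP[he /andP[k1 k2]] [e1 e2].
    have -> : a = e.1 by apply: sh_inj lr ka k1 e1.
    have -> : b = e.2 by apply: sh_inj lr kb k2 e2.
    by case: e he {e1 e2 k1 k2}.
  + by move=> h; exists (a, b) => //; rewrite !inE /= h ka kb.
- move: ka kb; rewrite !keepP => ka kb.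
  apply/imfsetP/idP.
  + case=> p; rewrite !inE /= => /andP[hp /eqP pl] [e1 e2].
    have f1 := congr1 fst e1; have f2 := congr1 snd e1.
    have g1 := congr1 fst e2; have g2 := congr1 snd e2.
    rewrite sh1 /= in f1; rewrite sh2 /= in f2; rewrite sh1 /= in g1; rewrite sh2 /= in g2.
    have ep : p = (l, p.2) by apply: pt_eq.
    rewrite /hbr f2 g2 eqxx -ep hp /= andbT.
    case: (Gc lr ka) => [[h1 h2]|[h1 h2]]; case: (Gc lr kb) => [[h3 h4]|[h3 h4]];
      rewrite h2 in f1; rewrite h4 in g1; apply/andP; split; apply/eqP; lia.
  + rewrite /hbr => /and4P[/eqP a1 /eqP b1 /eqP ab hl].
    exists (l, a.2); first by rewrite !inE /= hl eqxx.
    congr (_, _); apply: pt_eq; rewrite ?sh1 ?sh2 //=;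
      case: ifP => h; lia.
Qed.

Lemma adjT S l r a b : l <= r -> keepc l r a -> keepc l r b ->
  adj (compress_cols S l r) (shiftc l r a) (shiftc l r b) =
  [|| adj S a b, hbr S l r a b | hbr S l r b a].
Proof.
move=> lr ka kb; rewrite /adj !inET //.
by case: ((a, b) \in E S); case: ((b, a) \in E S); case: hbr; case: hbr.
Qed.

Lemma hbrF S l r (a b : pt) : ~ (a.1 = l - 1 /\ b.1 = r + 1) -> hbr S l r a b = false.
Proof. move=> h; apply/negbTE/and4P => [[/eqP h1 /eqP h2 _ _]]; exact: h. Qed.

Lemma sh_id l r (x y : int) : ~~ (r < x) -> shiftc l r (x, y) = (x, y).
Proof. by rewrite /shiftc /= => /negbTE ->. Qed.
Lemma sh_sh l r (x y : int) : r < x -> shiftc l r (x, y) = (x - (r - l + 1), y).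
Proof. by rewrite /shiftc /= => ->. Qed.

Lemma adj_farF S (a b : pt) : wf_edges S ->
  ~ ((b.1 = a.1 + 1 /\ b.2 = a.2) \/ (b.1 = a.1 - 1 /\ b.2 = a.2) \/
     (b.1 = a.1 /\ b.2 = a.2 + 1) \/ (b.1 = a.1 /\ b.2 = a.2 - 1)) -> adj S a b = false.
Proof. move=> wf h; apply/negbTE/negP => /(adj_in wf)[_ _ /unit_distP]; exact: h. Qed.

Lemma adjT_r S l r (x y : int) : wf_edges S -> nonisol S -> colrun S l r ->
  keepc l r (x, y) ->
  adj (compress_cols S l r) (shiftc l r (x, y))
      ((shiftc l r (x, y)).1 + 1, (shiftc l r (x, y)).2) = adj S (x, y) (x + 1, y).
Proof.
move=> wf ni cr ka; have lr := cr.1.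
have ka' := ka; rewrite keepP /= in ka'.
case: (eqVneq x (l - 1)) => hx.
- have sx : shiftc l r (x, y) = (x, y) by rewrite sh_id //; lia.
  have e : ((shiftc l r (x, y)).1 + 1, (shiftc l r (x, y)).2) = shiftc l r (r + 1, y).
    by rewrite sx sh_sh; [apply: pt_eq => /=; lia | lia].
  rewrite e adjT //; last by rewrite keepP /=; lia.
  rewrite adj_farF //=; last by lia.
  rewrite (@hbrF S l r (r + 1, y) (x, y)) /=; last by lia.
  rewrite /hbr /= hx !eqxx /= orbF.
  have hx1 : l - 1 <= x <= r by lia.
  by have := run_E y wf ni cr hx1; rewrite hx => ->.
- have kb : keepc l r (x + 1, y) by rewrite keepP /=; lia.
  have e : ((shiftc l r (x, y)).1 + 1, (shiftc l r (x, y)).2) = shiftc l r (x + 1, y).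
    apply: pt_eq; rewrite /= ?sh1 ?sh2 //=; case: ifP => h1; case: ifP => h2; lia.
  rewrite e adjT // hbrF /=; last by lia.
  by rewrite hbrF /= ?orbF //; lia.
Qed.

Lemma adjT_l S l r (x y : int) : wf_edges S -> nonisol S -> colrun S l r ->
  keepc l r (x, y) ->
  adj (compress_cols S l r) (shiftc l r (x, y))
      ((shiftc l r (x, y)).1 - 1, (shiftc l r (x, y)).2) = adj S (x, y) (x - 1, y).
Proof.
move=> wf ni cr ka; have lr := cr.1.
have ka' := ka; rewrite keepP /= in ka'.
case: (eqVneq x (r + 1)) => hx.
- have sx : shiftc l r (x, y) = (x - (r - l + 1), y) by rewrite sh_sh //; lia.
  have e : ((shiftc l r (x, y)).1 - 1, (shiftc l r (x, y)).2) = shiftc l r (l - 1, y).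
    by rewrite sx sh_id; [apply: pt_eq => /=; lia | lia].
  rewrite e adjT //; last by rewrite keepP /=; lia.
  rewrite adj_farF //=; last by lia.
  rewrite (@hbrF S l r (x, y) (l - 1, y)) /=; last by lia.
  rewrite /hbr /= hx !eqxx /=.
  have hx1 : l - 1 <= r <= r by lia.
  have -> : r + 1 - 1 = r by lia.
  by rewrite adjC (run_E y wf ni cr hx1).
- have kb : keepc l r (x - 1, y) by rewrite keepP /=; lia.
  have e : ((shiftc l r (x, y)).1 - 1, (shiftc l r (x, y)).2) = shiftc l r (x - 1, y).
    apply: pt_eq; rewrite /= ?sh1 ?sh2 //=; case: ifP => h1; case: ifP => h2; lia.
  rewrite e adjT // hbrF /=; last by lia.
  by rewrite hbrF /= ?orbF //; lia.
Qed.

Lemma adjT_v S l r (x y : int) (c : int) : l <= r -> keepc l r (x, y) ->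
  adj (compress_cols S l r) (shiftc l r (x, y))
      ((shiftc l r (x, y)).1, (shiftc l r (x, y)).2 + c) = adj S (x, y) (x, y + c).
Proof.
move=> lr ka.
have e : ((shiftc l r (x, y)).1, (shiftc l r (x, y)).2 + c) = shiftc l r (x, y + c).
  by apply: pt_eq; rewrite /= ?sh1 ?sh2.
have kb : keepc l r (x, y + c) by move: ka; rewrite !keepP.
rewrite e adjT // hbrF /=; last by move: ka; rewrite keepP /=; lia.
by rewrite hbrF /= ?orbF //; move: ka; rewrite keepP /=; lia.
Qed.

Lemma turningT S l r a : wf_edges S -> nonisol S -> colrun S l r -> keepc l r a ->
  turningb (compress_cols S l r) (shiftc l r a) = turningb S a.
Proof.
case: a => x y wf ni cr ka; have lr := cr.1.
rewrite /turningb inVT //; case: ((x, y) \in V S) => //=.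
rewrite /hnbr /vnbr !degE.
rewrite !adjT_r // !adjT_l // !adjT_v //=.
Qed.

Lemma tps_keep S l r (a : pt) : colrun S l r -> a \in tps S -> keepc l r a.
Proof.
case=> lr cc ha; case: (boolP (keepc l r a)) => //; rewrite keepP => hn.
have hx : l <= a.1 <= r by lia.
have := comp_nturn (cc _ hx) (erefl a.1); by rewrite -in_tps ha.
Qed.

Lemma tpsT S l r : wf_edges S -> nonisol S -> colrun S l r ->
  tps (compress_cols S l r) = shiftc l r @` tps S.
Proof.
move=> wf ni cr; apply/fsetP => q; apply/idP/imfsetP.
- rewrite in_tps => hq.
  have hv : q \in V (compress_cols S l r) by case/andP: hq.
  case: (VT_inv hv) => a [ha ka eq]; rewrite eq in hq.
  exists a => //; change (a \in tps S).
  by rewrite in_tps -(turningT wf ni cr ka).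
- case=> a /= ha ->; rewrite in_tps turningT //; first by rewrite -in_tps.
  exact: tps_keep cr ha.
Qed.

Lemma ord_sh l r a b : l <= r -> keepc l r a -> keepc l r b ->
  [/\ (a.1 < b.1) = ((shiftc l r a).1 < (shiftc l r b).1),
      (a.1 == b.1) = ((shiftc l r a).1 == (shiftc l r b).1),
      (a.2 < b.2) = ((shiftc l r a).2 < (shiftc l r b).2) &
      (a.2 == b.2) = ((shiftc l r a).2 == (shiftc l r b).2)].
Proof.
move=> lr; rewrite !keepP !sh1 !sh2 => ka kb; split=> //.
- case: (Gc lr ka) => [[h1 ->]|[h1 ->]]; case: (Gc lr kb) => [[h3 ->]|[h3 ->]];
    apply/idP/idP; lia.
- case: (Gc lr ka) => [[h1 ->]|[h1 ->]]; case: (Gc lr kb) => [[h3 ->]|[h3 ->]];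
    apply/eqP/eqP; lia.
Qed.

Lemma len_sh l r a b : l <= r -> keepc l r a -> keepc l r b ->
  (seg_len (shiftc l r a) (shiftc l r b) <= seg_len a b)%N.
Proof.
move=> lr; rewrite !keepP /seg_len !sh1 !sh2 => ka kb.
case: (Gc lr ka) => [[h1 ->]|[h1 ->]]; case: (Gc lr kb) => [[h3 ->]|[h3 ->]]; lia.
Qed.

Lemma all_iota0 (P : int -> bool) (a b : int) : a < b ->
  all (fun i : nat => P (a + i%:Z)) (iota 0 (absz (b - a))) <->
  (forall x, a <= x < b -> P x).
Proof.
move=> ab; split.
- move=> /allP h x hx.
  have e : x = a + (absz (x - a))%:Z by lia.
  rewrite e; apply: h; rewrite mem_iota; lia.
- move=> h; apply/allP => i; rewrite mem_iota => hi; apply: h; lia.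
Qed.

Lemma all_iota1 (P : int -> bool) (a b : int) : a < b ->
  all (fun i : nat => P (a + i%:Z)) (iota 1 (absz (b - a)).-1) <->
  (forall x, a < x < b -> P x).
Proof.
move=> ab; split.
- move=> /allP h x hx.
  have e : x = a + (absz (x - a))%:Z by lia.
  rewrite e; apply: h; rewrite mem_iota; lia.
- move=> h; apply/allP => i; rewrite mem_iota => hi; apply: h; lia.
Qed.

Lemma hsegP S u v : hsegb S u v <->
  [/\ u.2 = v.2, u.1 < v.1, turningb S u && turningb S v,
      (forall x, u.1 <= x < v.1 -> adj S (x, u.2) (x + 1, u.2)) &
      (forall x, u.1 < x < v.1 -> ~~ turningb S (x, u.2))].
Proof.
rewrite /hsegb; split.
- case/andP => /eqP h1 /andP[h2 /andP[h3 /andP[h4 /andP[h5 h6]]]].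
  split=> //; first by rewrite h3 h4.
  + exact: (all_iota0 (fun x => adj S (x, u.2) (x + 1, u.2)) h2).1 h5.
  + exact: (all_iota1 (fun x => ~~ turningb S (x, u.2)) h2).1 h6.
- case=> h1 h2 /andP[h3 h4] h5 h6; apply/andP; split; first by apply/eqP.
  rewrite h2 h3 h4 /=; apply/andP; split.
  + exact: (all_iota0 (fun x => adj S (x, u.2) (x + 1, u.2)) h2).2 h5.
  + exact: (all_iota1 (fun x => ~~ turningb S (x, u.2)) h2).2 h6.
Qed.

Lemma vsegP S u v : vsegb S u v <->
  [/\ u.1 = v.1, u.2 < v.2, turningb S u && turningb S v,
      (forall y, u.2 <= y < v.2 -> adj S (u.1, y) (u.1, y + 1)) &
      (forall y, u.2 < y < v.2 -> ~~ turningb S (u.1, y))].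
Proof.
rewrite /vsegb; split.
- case/andP => /eqP h1 /andP[h2 /andP[h3 /andP[h4 /andP[h5 h6]]]].
  split=> //; first by rewrite h3 h4.
  + exact: (all_iota0 (fun y => adj S (u.1, y) (u.1, y + 1)) h2).1 h5.
  + exact: (all_iota1 (fun y => ~~ turningb S (u.1, y)) h2).1 h6.
- case=> h1 h2 /andP[h3 h4] h5 h6; apply/andP; split; first by apply/eqP.
  rewrite h2 h3 h4 /=; apply/andP; split.
  + exact: (all_iota0 (fun y => adj S (u.1, y) (u.1, y + 1)) h2).2 h5.
  + exact: (all_iota1 (fun y => ~~ turningb S (u.1, y)) h2).2 h6.
Qed.

Definition hinv (l r x : int) := if x < l then x else x + (r - l + 1).


Lemma transferE (P : int -> bool) l r (a b : int) : l <= r ->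
  (a < l) || (r < a) -> (b < l) || (r < b) -> a < b ->
  (forall x, l <= x <= r -> P x = P (l - 1)) ->
  (forall x, a <= x < b -> P x) <->
  (forall x, (if r < a then a - (r - l + 1) else a) <= x <
             (if r < b then b - (r - l + 1) else b) -> P (hinv l r x)).
Proof.
move=> lr ka kb ab hP; split.
- move=> H x hx; apply: H; move: hx; rewrite /hinv.
  case: (ltP r a); case: (ltP r b); case: (ltP x l); move=> *; lia.
- move=> H x hx; case: (ltP x l) => h0.
  + have e : hinv l r x = x by rewrite /hinv h0.
    rewrite -e; apply: H; move: hx; case: (ltP r a); case: (ltP r b); move=> *; lia.
  + case: (ltP r x) => h5.
    * have e : hinv l r (x - (r - l + 1)) = x by rewrite /hinv; case: ltP => h; lia.
      rewrite -e; apply: H; move: hx; case: (ltP r a); case: (ltP r b); move=> *; lia.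
    * rewrite hP; last by lia.
      have e : hinv l r (l - 1) = l - 1 by rewrite /hinv; case: ltP => h; lia.
      rewrite -e; apply: H; move: hx; case: (ltP r a); case: (ltP r b); move=> *; lia.
Qed.

Lemma transferT (P : int -> bool) l r (a b : int) : l <= r ->
  (a < l) || (r < a) -> (b < l) || (r < b) -> a < b ->
  (forall x, l <= x <= r -> P x) ->
  (forall x, a < x < b -> P x) <->
  (forall x, (if r < a then a - (r - l + 1) else a) < x <
             (if r < b then b - (r - l + 1) else b) -> P (hinv l r x)).
Proof.
move=> lr ka kb ab hP; split.
- move=> H x hx; apply: H; move: hx; rewrite /hinv.
  case: (ltP r a); case: (ltP r b); case: (ltP x l); move=> *; lia.
- move=> H x hx; case: (ltP x l) => h0.
  + have e : hinv l r x = x by rewrite /hinv h0.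
    rewrite -e; apply: H; move: hx; case: (ltP r a); case: (ltP r b); move=> *; lia.
  + case: (ltP r x) => h5.
    * have e : hinv l r (x - (r - l + 1)) = x by rewrite /hinv; case: ltP => h; lia.
      rewrite -e; apply: H; move: hx; case: (ltP r a); case: (ltP r b); move=> *; lia.
    * by apply: hP; lia.
Qed.

Lemma hinv_sh (l r x y : int) : l <= r ->
  keepc l r (hinv l r x, y) /\ shiftc l r (hinv l r x, y) = (x, y).
Proof.
move=> lr; rewrite keepP /hinv /shiftc /=; case: (ltP x l) => h.
- by rewrite h ifF //; apply/negbTE; rewrite -leNgt; lia.
- have h2 : r < x + (r - l + 1) by lia.
  rewrite h2 orbT; split=> //; apply: pt_eq => /=; lia.
Qed.

Lemma ET_row S l r (x y : int) : wf_edges S -> nonisol S -> colrun S l r ->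
  adj (compress_cols S l r) (x, y) (x + 1, y) =
  adj S (hinv l r x, y) (hinv l r x + 1, y).
Proof.
move=> wf ni cr; have [k e] := hinv_sh x y cr.1.
by have := adjT_r wf ni cr k; rewrite e /=.
Qed.

Lemma TT_row S l r (x y : int) : wf_edges S -> nonisol S -> colrun S l r ->
  turningb (compress_cols S l r) (x, y) = turningb S (hinv l r x, y).
Proof.
move=> wf ni cr; have [k e] := hinv_sh x y cr.1.
by rewrite -(turningT wf ni cr k) e.
Qed.

Lemma hseg_col S l r a b : wf_edges S -> nonisol S -> colrun S l r ->
  a \in tps S -> b \in tps S ->
  hsegb S a b = hsegb (compress_cols S l r) (shiftc l r a) (shiftc l r b).
Proof.
move=> wf ni cr ha hb; have lr := cr.1.
have ka := tps_keep cr ha; have kb := tps_keep cr hb.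
have [o1 _ _ _] := ord_sh lr ka kb.
have ta := turningT wf ni cr ka; have tb := turningT wf ni cr kb.
have ka' := ka; have kb' := kb; rewrite keepP in ka'; rewrite keepP in kb'.
have hPE : forall y, forall x, l <= x <= r ->
    (fun x => adj S (x, y) (x + 1, y)) x = (fun x => adj S (x, y) (x + 1, y)) (l - 1).
  move=> y x hx /=; rewrite (run_E y wf ni cr) ?(run_E y wf ni cr) //; lia.
have hPT : forall y, forall x, l <= x <= r -> (fun x => ~~ turningb S (x, y)) x.
  move=> y x hx /=; case: cr => _ cc; exact: comp_nturn (cc _ hx) _.
apply/idP/idP => /hsegP [h1 h2 /andP[h3 h4] h5 h6]; apply/hsegP; split.
- by rewrite !sh2.
- by rewrite -o1.
- by rewrite ta tb h3 h4.
- move=> x hx; rewrite sh2 ET_row //; rewrite !sh1 in hx.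
  exact: ((transferE (P := fun x => adj S (x, a.2) (x + 1, a.2)) lr ka' kb' h2 (hPE a.2)).1 h5 x hx).
- move=> x hx; rewrite sh2 TT_row //; rewrite !sh1 in hx.
  exact: ((transferT (P := fun x => ~~ turningb S (x, a.2)) lr ka' kb' h2 (hPT a.2)).1 h6 x hx).
- by rewrite !sh2 in h1.
- by rewrite o1.
- by rewrite -ta -tb h3 h4.
- have h2' : a.1 < b.1 by rewrite o1.
  apply: ((transferE (P := fun x => adj S (x, a.2) (x + 1, a.2)) lr ka' kb' h2' (hPE a.2)).2).
  move=> x hx /=; rewrite -ET_row //; rewrite sh2 in h5; apply: h5; by rewrite !sh1.
- have h2' : a.1 < b.1 by rewrite o1.
  apply: ((transferT (P := fun x => ~~ turningb S (x, a.2)) lr ka' kb' h2' (hPT a.2)).2).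
  move=> x hx /=; rewrite -TT_row //; rewrite sh2 in h6; apply: h6; by rewrite !sh1.
Qed.

Lemma col_pt l r (a : pt) (y : int) : keepc l r a ->
  keepc l r (a.1, y) /\ shiftc l r (a.1, y) = ((shiftc l r a).1, y).
Proof. by rewrite !keepP => ka; split=> //; apply: pt_eq; rewrite ?sh1 ?sh2. Qed.

Lemma vseg_col S l r a b : wf_edges S -> nonisol S -> colrun S l r ->
  a \in tps S -> b \in tps S ->
  vsegb S a b = vsegb (compress_cols S l r) (shiftc l r a) (shiftc l r b).
Proof.
move=> wf ni cr ha hb; have lr := cr.1.
have ka := tps_keep cr ha; have kb := tps_keep cr hb.
have [_ o2 _ _] := ord_sh lr ka kb.
have ta := turningT wf ni cr ka; have tb := turningT wf ni cr kb.
have EV : forall y, adj (compress_cols S l r) ((shiftc l r a).1, y) ((shiftc l r a).1, y + 1)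
                    = adj S (a.1, y) (a.1, y + 1).
  move=> y; have [k e] := col_pt y ka.
  by have := adjT_v S 1 lr k; rewrite e /=.
have TV : forall y, turningb (compress_cols S l r) ((shiftc l r a).1, y) = turningb S (a.1, y).
  by move=> y; have [k e] := col_pt y ka; rewrite -e turningT.
apply/idP/idP => /vsegP [h1 h2 /andP[h3 h4] h5 h6]; apply/vsegP; split.
- by apply/eqP; rewrite -o2; apply/eqP.
- by rewrite !sh2.
- by rewrite ta tb h3 h4.
- by move=> y; rewrite !sh2 EV; apply: h5.
- by move=> y; rewrite !sh2 TV; apply: h6.
- by apply/eqP; rewrite o2; apply/eqP.
- by rewrite !sh2 in h2.
- by rewrite -ta -tb h3 h4.
- by move=> y hy; rewrite -EV; apply: h5; rewrite !sh2.
- by move=> y hy; rewrite -TV; apply: h6; rewrite !sh2.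
Qed.

Lemma degT S l r a : wf_edges S -> nonisol S -> colrun S l r -> keepc l r a ->
  deg (compress_cols S l r) (shiftc l r a) = deg S a.
Proof.
case: a => x y wf ni cr ka; have lr := cr.1.
by rewrite !degE !adjT_r // !adjT_l // !adjT_v //=.
Qed.

Lemma unit_dist_sh l r a b : l <= r -> keepc l r a -> keepc l r b ->
  unit_dist a b -> unit_dist (shiftc l r a) (shiftc l r b).
Proof.
move=> lr ka kb /unit_distP h; move: ka kb; rewrite !keepP => ka kb.
rewrite /unit_dist !sh1 !sh2.
case: (Gc lr ka) => [[h1 ->]|[h1 ->]]; case: (Gc lr kb) => [[h3 ->]|[h3 ->]]; lia.
Qed.

Lemma Inv_col S l r : Inv S -> colrun S l r -> Inv (compress_cols S l r).
Proof.
case=> wf ni cc rc cr; have lr := cr.1; split.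
- move=> e; rewrite /compress_cols /= in_fsetU.
  case/orP => /imfsetP [e0]; rewrite !inE /=.
  + case/andP => he /andP[k1 k2] -> /=.
    have [h1 h2 h3] := wf _ he.
    by rewrite !inVT // unit_dist_sh.
  + case/andP => hp /eqP pl -> /=.
    have ep : e0 = (l, e0.2) by apply: pt_eq.
    rewrite ep in hp; have [hl hr] := run_ends wf ni cr hp.
    have e1 : (l - 1, e0.2) = shiftc l r (l - 1, e0.2) by rewrite sh_id //; lia.
    have e2 : (l, e0.2) = shiftc l r (r + 1, e0.2).
      by rewrite sh_sh; [apply: pt_eq => /=; lia | lia].
    rewrite {1}e1 {1}e2 !inVT //; try by rewrite keepP /=; lia.
    by split=> //; rewrite /unit_dist /=; lia.
- move=> q /VT_inv [a [ha ka ->]]; rewrite degT //; exact: ni.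
- move=> p q /VT_inv [a [ha ka ->]] /VT_inv [b [hb kb ->]] x.
  move: ka kb; rewrite !keepP !sh1 => ka kb hx.
  case: (ltP x l) => hxl.
  + have [z [hz ez]] : exists z : pt, z \in V S /\ z.1 = x.
      apply: (cc a b ha hb); move: hx; case: (Gc lr ka) => [[h1 ->]|[h1 ->]];
        case: (Gc lr kb) => [[h3 ->]|[h3 ->]]; lia.
    have kz : keepc l r z by rewrite keepP; lia.
    exists (shiftc l r z); rewrite inVT // sh1; split=> //.
    by case: ltP => //; lia.
  + have [z [hz ez]] : exists z : pt, z \in V S /\ z.1 = x + (r - l + 1).
      apply: (cc a b ha hb); move: hx; case: (Gc lr ka) => [[h1 ->]|[h1 ->]];
        case: (Gc lr kb) => [[h3 ->]|[h3 ->]]; lia.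
    have kz : keepc l r z by rewrite keepP; lia.
    exists (shiftc l r z); rewrite inVT // sh1; split=> //.
    by case: ltP => //; lia.
- move=> p q /VT_inv [a [ha ka ->]] /VT_inv [b [hb kb ->]] y.
  rewrite !sh2 => hy; have [z [hz ez]] := rc a b ha hb y hy.
  case: (boolP (keepc l r z)) => kz.
  + by exists (shiftc l r z); rewrite inVT // sh2.
  + move: kz; rewrite keepP => kz.
    have hzx : l <= z.1 <= r by lia.
    have ezp : z = (z.1, y) by apply: pt_eq.
    rewrite ezp (run_chain y wf ni cr hzx) in hz.
    have [hl _] := run_ends wf ni cr hz.
    have kl : keepc l r (l - 1, y) by rewrite keepP /=; lia.
    exists (shiftc l r (l - 1, y)); rewrite inVT // sh2; split=> //.
Qed.

Lemma Corr_col S l r : Inv S -> colrun S l r ->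
  Corr S (compress_cols S l r) (shiftc l r).
Proof.
case=> wf ni _ _ cr; have lr := cr.1; split.
- move=> u v hu hv; apply: sh_inj lr (tps_keep cr hu) (tps_keep cr hv).
- by rewrite tpsT.
- move=> u v hu hv; exact: ord_sh lr (tps_keep cr hu) (tps_keep cr hv).
- by move=> u v hu hv; rewrite /segb (hseg_col wf ni cr hu hv) (vseg_col wf ni cr hu hv).
- move=> u v hu hv _; exact: len_sh lr (tps_keep cr hu) (tps_keep cr hv).
Qed.

Lemma step_ok S S' : Inv S -> compress_step S S' -> Inv S' /\ exists f, Corr S S' f.
Proof.
move=> hi; case=> l r.
- case=> lr cc _ _; have cr : colrun S l r by [].
  by split; [apply: Inv_col | exists (shiftc l r); apply: Corr_col].
- move=> /row_run_tr [lr cc _ _]; have cr : colrun (trS S) l r by [].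
  have hi' := Inv_tr hi.
  split; first by apply: Inv_tr; apply: Inv_col.
  have := Corr_tr (Corr_col hi' cr); rewrite trSK => h.
  by eexists; exact: h.
Qed.

Lemma comp_ok S T : compresses S T -> Inv S -> Inv T /\ exists f, Corr S T f.
Proof.
elim=> [S0 | S1 S2 S3 hs _ IH] hi; first by split=> //; exists id; exact: Corr_id.
have [hi2 [f cf]] := step_ok hi hs.
have [hi3 [h ch]] := IH hi2.
by split=> //; exists (h \o f); exact: Corr_comp cf ch.
Qed.

Lemma path_col S (s : seq pt) (p : pt) : wf_edges S ->
  path (adj S) p s -> p \in V S -> all (fun x => x \in V S) s ->
  forall x : int, p.1 <= x <= (last p s).1 -> exists z : pt, z \in V S /\ z.1 = x.
Proof.
move=> wf; elim: s p => [|z s IH] p /=.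
  by move=> _ hp _ x hx; exists p; split=> //; lia.
case/andP => hpz hpath hp /andP[hz hall] x hx.
case: (leP x p.1) => hxp; first by exists p; split=> //; lia.
apply: (IH z hpath hz hall x).
have [_ _ /unit_distP] := adj_in wf hpz; lia.
Qed.

Lemma path_row S (s : seq pt) (p : pt) : wf_edges S ->
  path (adj S) p s -> p \in V S -> all (fun x => x \in V S) s ->
  forall y : int, p.2 <= y <= (last p s).2 -> exists z : pt, z \in V S /\ z.2 = y.
Proof.
move=> wf; elim: s p => [|z s IH] p /=.
  by move=> _ hp _ x hx; exists p; split=> //; lia.
case/andP => hpz hpath hp /andP[hz hall] x hx.
case: (leP x p.2) => hxp; first by exists p; split=> //; lia.
apply: (IH z hpath hz hall x).
have [_ _ /unit_distP] := adj_in wf hpz; lia.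
Qed.

Lemma Inv_init S : is_shape S -> (exists a b : pt, [/\ a \in V S, b \in V S & a != b]) -> Inv S.
Proof.
case=> _ wf con [a [b [ha hb ab]]]; split=> //.
- move=> p hp.
  have [q [hq pq]] : exists q : pt, q \in V S /\ q != p.
    case: (eqVneq p a) => e; first by exists b; rewrite -e eq_sym in ab.
    by exists a; rewrite eq_sym.
  have [s [hs hl _]] := con p q hp hq.
  case: s hs hl => [|z s] /=; first by move=> _ e; rewrite e eqxx in pq.
  by case/andP => hz _ _; apply: deg_pos wf hz.
- move=> p q hp hq x hx; have [s [hs hl hall]] := con p q hp hq.
  by apply: (path_col wf hs hp hall); rewrite hl.
- move=> p q hp hq x hx; have [s [hs hl hall]] := con p q hp hq.
  by apply: (path_row wf hs hp hall); rewrite hl.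
Qed.

Definition small (S : gshape) := forall a b : pt, a \in V S -> b \in V S -> a = b.

Lemma small_tr S : small S -> small (trS S).
Proof. move=> h a b; rewrite !in_trV' => ha hb; apply: trp_inj; exact: h. Qed.

Lemma step_col_small S l r : small S -> max_col_run S l r ->
  V (compress_cols S l r) = fset0.
Proof.
move=> sm [lr cc _ _]; have [[p [hp e]] _] := cc l (ltac:(lia) : l <= l <= r).
apply/fsetP => q; rewrite in_fset0; apply/negP => /VT_inv [a [ha ka _]].
move: ka; rewrite (sm a p ha hp) keepP e; lia.
Qed.

Lemma step_small S S' : small S -> compress_step S S' -> V S' = fset0.
Proof.
move=> sm; case=> l r; first by apply: step_col_small.
move=> /row_run_tr h; rewrite /compress_rows.
have := step_col_small (small_tr sm) h.
move: (compress_cols (trS S) l r) => T' e; rewrite /trS /= e.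
by apply/fsetP => q; rewrite in_fset0; apply/negP => /imfsetP [x]; rewrite in_fset0.
Qed.

Lemma small_ok S T : compresses S T -> small S -> T = S \/ V T = fset0.
Proof.
elim=> [S0|S1 S2 S3 hs _ IH] sm; first by left.
have e2 := step_small sm hs.
have sm2 : small S2 by move=> a b; rewrite e2 in_fset0.
by case: (IH sm2) => [->|]; right.
Qed.

Lemma small_tps S : wf_edges S -> small S -> tps S = fset0.
Proof.
move=> wf sm; apply/fsetP => t; rewrite in_fset0 in_tps.
apply/negP => ht.
have htv : t \in V S by case/andP: ht.
have nadj : forall z, adj S t z = false.
  move=> z; apply/negP => /(adj_in wf) [h1 h2 h3].
  by move: h3; rewrite (sm z t h2 h1) /unit_dist; lia.
by move: ht; rewrite /turningb degE /hnbr /vnbr !nadj /= andbF.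
Qed.

Lemma in_segs S (q : pt * pt) : (q \in segs S) = [&& q.1 \in tps S, q.2 \in tps S & segb S q.1 q.2].
Proof. by rewrite /segs !inE -!andbA. Qed.

Lemma segs_img S T f : Corr S T f ->
  segs T = (fun p : pt * pt => (f p.1, f p.2)) @` segs S.
Proof.
case=> i1 m1 _ s1 _; apply/fsetP => q; apply/idP/imfsetP.
- rewrite in_segs -m1 => /and3P [/imfsetP [a ha e1] /imfsetP [b hb e2] hs].
  exists (a, b); last by case: q e1 e2 {hs} => ? ? /= -> ->.
  by rewrite in_segs /= ha hb /= s1 // -e1 -e2.
- case=> [[a b]]; rewrite in_segs /= => /and3P [ha hb hs] ->.
  rewrite in_segs /= -m1; apply/and3P; split.
  + by apply/imfsetP; exists a.
  + by apply/imfsetP; exists b.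
  + by rewrite -s1.
Qed.

Lemma card_segs S T f : Corr S T f -> #|` segs T| = #|` segs S|.
Proof.
move=> c; rewrite (segs_img c); case: c => i1 _ _ _ _.
rewrite card_in_imfset // => [[a b] [a' b']]; rewrite !in_segs /=.
case/and3P => ha hb _ /and3P [ha' hb' _] [e1 e2].
by rewrite (i1 _ _ ha ha' e1) (i1 _ _ hb hb' e2).
Qed.

Lemma seq_min (s : seq int) : s != [::] -> exists2 m, m \in s & forall z, z \in s -> m <= z.
Proof.
elim: s => [//|a s IH] _.
case: (eqVneq s [::]) => [->|ns].
  by exists a; rewrite ?mem_head // => z; rewrite inE => /eqP ->.
have [m hm hmin] := IH ns.
case: (leP a m) => h.
- exists a; first by rewrite mem_head.
  move=> z; rewrite inE => /orP [/eqP -> //|hz]; have := hmin z hz; lia.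
- exists m; first by rewrite inE hm orbT.
  move=> z; rewrite inE => /orP [/eqP ->|hz]; [lia|exact: hmin].
Qed.

Lemma col_has_tp T (x : int) : (exists z : pt, z \in V T /\ z.1 = x) ->
  ~ compressible_col T x -> exists t : pt, t \in tps T /\ t.1 = x.
Proof.
move=> hz nc.
case: (boolP (has (fun t : pt => t.1 == x) (enum_fset (tps T)))).
- by case/hasP => t ht /eqP e; exists t.
- move/hasPn => h; exfalso; apply: nc; split=> // p hp e.
  by have := h p hp; rewrite e eqxx.
Qed.

Lemma fits_col T k : colcontig T -> (forall x, ~ compressible_col T x) ->
  #|` tps T| = k -> V T != fset0 ->
  exists x0 : int, forall p : pt, p \in V T -> x0 <= p.1 < x0 + k%:Z.
Proof.
move=> cc nc ck ne.
have [m hm hmin] : exists2 m : int, m \in [seq p.1 | p : pt <- enum_fset (V T)] &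
    forall z, z \in [seq p.1 | p : pt <- enum_fset (V T)] -> m <= z.
  apply: seq_min; case/fset0Pn: ne => p hp.
  apply/negP => /eqP e.
  have : p.1 \in [seq p.1 | p : pt <- enum_fset (V T)] by apply: map_f.
  by rewrite e.
case/mapP: hm => p0' hp0 em.
have {em} em : m = (p0' : pt).1 by [].
move: (p0' : pt) hp0 em => p0 hp0 em {p0'}.
exists m => p hp.
have hmp : m <= p.1 by apply: hmin; apply: map_f.
rewrite hmp /=.
set n := absz (p.1 - m).
have sub : {subset [seq m + i%:Z | i <- iota 0 n.+1] <= [seq t.1 | t : pt <- enum_fset (tps T)]}.
  move=> x /mapP [i]; rewrite mem_iota => hi ->.
  have [t [ht et]] := col_has_tp (cc p0 p hp0 hp (m + i%:Z) ltac:(lia)) (nc _).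
  by rewrite -et; apply: map_f.
have := uniq_leq_size _ sub.
rewrite map_inj_uniq ?iota_uniq; last by move=> i j /= h; lia.
rewrite !size_map size_iota => /(_ isT).
have -> : size (enum_fset (tps T)) = k by rewrite -ck.
move=> h.
lia.
Qed.

Lemma fits_all T k : Inv T -> incompressible T -> #|` tps T| = k -> fits_in k T.
Proof.
case=> wf ni cc rc [ncc ncr] ck.
case: (eqVneq (V T) fset0) => e.
  by exists 0, 0 => p; rewrite e in_fset0.
have [x0 hx] := fits_col cc ncc ck e.
have [_ _ cc' _] := Inv_tr (And4 wf ni cc rc).
have ncc' : forall y, ~ compressible_col (trS T) y by move=> y /comp_row_tr; apply: ncr.
have ck' : #|` tps (trS T)| = k.
  by rewrite tps_tr card_in_imfset //; move=> a b _ _; exact: trp_inj.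
have e' : V (trS T) != fset0.
  case/fset0Pn: e => p hp; apply/fset0Pn; exists (trp p); by rewrite in_trV.
have [y0 hy] := fits_col cc' ncc' ck' e'.
exists x0, y0 => p hp; split; first exact: hx.
by have := hy (trp p); rewrite in_trV => /(_ hp).
Qed.

Lemma tps_sub S p : p \in tps S -> p \in V S.
Proof. by rewrite in_tps => /andP[]. Qed.

From Stdlib Require Import Classical.

Unset Implicit Arguments.

Theorem proposition2p2 (S T : gshape) (k l : nat) :
  is_shape S -> #|` tps S| = k -> #|` segs S| = l ->
  compresses S T -> incompressible T ->
  [/\ #|` tps T| = k /\ #|` segs T| = l,
      exists f : pt -> pt,
        [/\ {in tps S &, injective f},
            f @` tps S = tps T,
            {in tps S &, forall u v,
               [/\ (u.1 < v.1) = ((f u).1 < (f v).1),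
                   (u.1 == v.1) = ((f u).1 == (f v).1),
                   (u.2 < v.2) = ((f u).2 < (f v).2) &
                   (u.2 == v.2) = ((f u).2 == (f v).2)]},
            {in tps S &, forall u v, segb S u v = segb T (f u) (f v)} &
            {in tps S &, forall u v, segb S u v ->
               (seg_len (f u) (f v) <= seg_len u v)%N}]
    & fits_in k T].
Proof.
move=> hs hk hl hc hinc.
case: (classic (exists a b : pt, [/\ a \in V S, b \in V S & a != b])) => H.
- have hi := Inv_init hs H.
  have [hiT [f cf]] := comp_ok hc hi.
  have ckT : #|` tps T| = k.
    by case: cf => i1 m1 _ _ _; rewrite -m1 card_in_imfset.
  split; [split=> //; rewrite (card_segs cf) // | exists f; exact: cf | exact: fits_all].
- have sm : small S.
    move=> a b ha hb; apply: NNPP => ne; apply: H; exists a, b; split=> //.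
    by apply/eqP.
  have wf : wf_edges S by case: hs.
  have t0 := small_tps wf sm.
  have s0 : segs S = fset0.
    by apply/fsetP => q; rewrite in_segs t0 in_fset0.
  case: (small_ok hc sm) => [eT|v0].
  + exfalso; rewrite eT in hinc; case: hinc => nc _.
    case: hs => /fset0Pn [p hp] _ _.
    apply: (nc p.1); split; first by exists p.
    by move=> t; rewrite t0 in_fset0.
  + have tT : tps T = fset0.
      by apply/fsetP => q; rewrite in_fset0; apply/negP => /tps_sub; rewrite v0 in_fset0.
    have sT : segs T = fset0.
      by apply/fsetP => q; rewrite in_segs tT in_fset0.
    have k0 : k = 0%N by rewrite -hk t0 cardfs0.
    have l0 : l = 0%N by rewrite -hl s0 cardfs0.
    subst k l.
    split.
    * by rewrite tT sT cardfs0.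
    * exists id; split.
      -- by move=> u v hu; rewrite t0 in_fset0 in hu.
      -- by rewrite imfset_id t0 tT.
      -- by move=> u v hu; rewrite t0 in_fset0 in hu.
      -- by move=> u v hu; rewrite t0 in_fset0 in hu.
      -- by move=> u v hu; rewrite t0 in_fset0 in hu.
    * by exists 0, 0 => p; rewrite v0 in_fset0.
Qed.
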